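(* For $n\ge 0$, $$(\mathfrak C_0+\mathfrak C_0)^n=(2n)!\sum_{l=0}^{n}\frac{(-1)^{n-l}(2n-2l-3)!!\,(2l-1)}{2^{n-l}(n-l)!\,(2l)!}\mathfrak C_{2l}.$$
   Context: The numbers $\mathfrak C_{2n}$ (Cauchy numbers with level $2$) are defined by $\frac{t}{{\rm arcsinh}\,t}=\sum_{n=0}^\infty\mathfrak C_{2n}\frac{t^{2n}}{(2n)!}$ (equivalently $\mathfrak C_{2n}=\mathfrak C_{2n}^{(1)}$, where ${\rm Lif}_{2,1}({\rm arcsinh}\,t)=\sum_n\mathfrak C_n^{(1)}t^n/n!$ with ${\rm Lif}_{2,1}(z)=\sum_{m\ge0}\frac{z^{2m}}{(2m+1)!}$). Convolution notation: $(\mathfrak C_{2j_1}+\cdots+\mathfrak C_{2j_k})^n:=\sum_{i_1+\cdots+i_k=n,\ i_1,\dots,i_k\ge0}\frac{(2n)!}{(2i_1)!\cdots(2i_k)!}\mathfrak C_{2i_1+2j_1}\cdots\mathfrak C_{2i_k+2j_k}$. Double factorials: $(2i-1)!!=(2i-1)(2i-3)\cdots1$ for $i\ge1$, $(-1)!!=1$, and $(-(2i+1))!!=\frac{(-1)^i}{(2i-1)!!}$ for $i\ge1$. *)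

(* Defs.v *)
From Stdlib Require Import Reals ZArith Lia.
From Coquelicot Require Import Coquelicot.
Open Scope R_scope.

Definition asinh (t : R) : R := ln (t + sqrt (t ^ 2 + 1)).

Fixpoint dfact (k : nat) : nat :=
  match k with
  | O => 1%nat
  | S O => 1%nat
  | S (S m as p) => (k * dfact m)%nat
  end.

(* Double factorial of an odd integer z, as a real number:
   z!! = dfact z for z >= 1, (-1)!! = 1, and
   (-(2i+1))!! = (-1)^i / (2i-1)!! for i >= 1. (Only used at odd z.) *)
Definition odd_dfact (z : Z) : R :=
  if Z.leb 0 z then INR (dfact (Z.to_nat z))
  else
    let i := Z.to_nat ((- z - 1) / 2) in
    if Nat.eqb i 0 then 1 else (-1) ^ i / INR (dfact (2 * i - 1)).

(* (C_0 + C_0)^n := sum_{i1+i2=n} (2n)!/((2 i1)! (2 i2)!) C_{2 i1} C_{2 i2},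
   where C2 k stands for the Cauchy number with level 2, C_{2k}. *)
Definition conv2 (C2 : nat -> R) (n : nat) : R :=
  sum_f_R0 (fun i => INR (fact (2 * n)%nat) / (INR (fact (2 * i)%nat) * INR (fact (2 * (n - i))%nat))
                     * C2 i * C2 (n - i)%nat) n.

(* Main.v *)
Require Import Defs.
From Stdlib Require Import Reals ZArith Lia.
From Coquelicot Require Import Coquelicot.
Open Scope R_scope.
From Stdlib Require Import Lra.

Lemma L_rad (a : nat -> R) (rho : R) :
  (forall y, 0 < y < rho -> ex_pseries a y) ->
  forall x, 0 <= x < rho -> Rbar_lt (Rabs x) (CV_radius a).
Proof.
  intros H x Hx.
  set (y := (x + rho) / 2).
  assert (Hy : 0 < y < rho) by (unfold y; lra).
  assert (He := H y Hy).
  apply ex_pseries_R in He.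
  apply ex_series_lim_0 in He.
  destruct (filterlim_bounded (fun n => a n * y ^ n)) as [M HM].
  { exists 0. exact He. }
  assert (Hle : Rbar_le y (CV_radius a)).
  { destruct (CV_radius_bounded a) as [Hub _]. apply Hub. exists M. intro n. exact (HM n). }
  rewrite Rabs_pos_eq by lra.
  destruct (CV_radius a) as [r| |]; simpl in *; try lra; auto.
  all: unfold y in *; lra.
Qed.

Lemma uniq_base (a : nat -> R) (rho : R) : 0 < rho ->
  (forall x, 0 < x < rho -> ex_pseries a x) ->
  (forall x, 0 < x < rho -> PSeries a x = 0) -> a O = 0.
Proof.
  intros Hr He H0.
  assert (Hc : continuity_pt (PSeries a) 0).
  { apply PSeries_continuity. apply (L_rad a rho He). lra. }
  rewrite <- PSeries_0.
  destruct (Req_dec (PSeries a 0) 0) as [E|E]; [exact E|exfalso].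
  destruct (Hc (Rabs (PSeries a 0)) (Rabs_pos_lt _ E)) as [alp [Halp Hd]].
  set (x := Rmin alp rho / 2).
  assert (Hx : 0 < x < rho /\ x < alp).
  { unfold x. pose proof (Rmin_l alp rho). pose proof (Rmin_r alp rho).
    pose proof (Rmin_glb_lt alp rho 0 Halp Hr). lra. }
  specialize (Hd x).
  simpl in Hd. unfold R_dist in Hd. rewrite (H0 x) in Hd by lra.
  assert (HH : D_x no_cond 0 x /\ Rabs (x - 0) < alp).
  { split. split. exact I. lra. rewrite Rminus_0_r, Rabs_pos_eq; lra. }
  specialize (Hd HH). rewrite Rminus_0_l, Rabs_Ropp in Hd. lra.
Qed.

Lemma uniq0 (rho : R) : 0 < rho -> forall n (a : nat -> R),
  (forall x, 0 < x < rho -> ex_pseries a x) ->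
  (forall x, 0 < x < rho -> PSeries a x = 0) -> a n = 0.
Proof.
  intros Hr n. induction n as [|n IH]; intros a He H0.
  - exact (uniq_base a rho Hr He H0).
  - assert (Ha0 := uniq_base a rho Hr He H0).
    change (a (S n)) with (PS_decr_1 a n).
    apply IH.
    + intros x Hx. apply ex_pseries_decr_1. right. exists (/x).
      change (/x * x = 1). field. lra. apply He; exact Hx.
    + intros x Hx. pose proof (PSeries_decr_1 a x (He x Hx)) as E.
      rewrite H0, Ha0 in E by exact Hx.
      apply (Rmult_eq_reg_l x). lra. lra.
Qed.

Lemma uniq (rho : R) (a b : nat -> R) : 0 < rho ->
  (forall x, 0 < x < rho -> ex_pseries a x) ->
  (forall x, 0 < x < rho -> ex_pseries b x) ->
  (forall x, 0 < x < rho -> PSeries a x = PSeries b x) -> forall n, a n = b n.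
Proof.
  intros Hr Ha Hb H n.
  assert (E := uniq0 rho Hr n (fun k => a k - b k)).
  cut (a n - b n = 0). lra.
  apply E.
  - intros x Hx. apply (ex_pseries_ext (PS_minus a b)). intro k. reflexivity.
    apply ex_pseries_minus; auto.
  - intros x Hx. rewrite <- (PSeries_ext (PS_minus a b)) by (intro k; reflexivity).
    rewrite PSeries_minus by auto. rewrite H by auto. ring.
Qed.

Definition Sq (m : nat) : R :=
  - (-1) ^ m * odd_dfact (2 * Z.of_nat m - 3) / (2 ^ m * INR (fact m)).

Lemma od_pos j : odd_dfact (Z.of_nat j) = INR (dfact j).
Proof.
  unfold odd_dfact.
  replace (Z.leb 0 (Z.of_nat j)) with true by (symmetry; apply Z.leb_le; lia).
  rewrite Nat2Z.id. reflexivity.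
Qed.

Lemma dfact_SS m : dfact (S (S m)) = (S (S m) * dfact m)%nat.
Proof. reflexivity. Qed.

Lemma Sq_0 : Sq 0 = 1.
Proof. unfold Sq, odd_dfact. simpl. field. Qed.

Lemma Sq_rec m : Sq (S m) = (1 - 2 * INR m) / (2 * INR (S m)) * Sq m.
Proof.
  destruct m as [|[|k]].
  - unfold Sq, odd_dfact. simpl. field.
  - unfold Sq, odd_dfact. simpl. field.
  - unfold Sq.
    replace (2 * Z.of_nat (S (S (S k))) - 3)%Z with (Z.of_nat (S (S (2 * k + 1)))) by lia.
    replace (2 * Z.of_nat (S (S k)) - 3)%Z with (Z.of_nat (2 * k + 1)) by lia.
    rewrite !od_pos, dfact_SS.
    change (fact (S (S (S k)))) with (S (S (S k)) * fact (S (S k)))%nat.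
    rewrite !mult_INR.
    assert (H1 := INR_fact_neq_0 (S (S k))).
    assert (H2 : INR (dfact (2 * k + 1)) <> 0).
    { apply not_0_INR. clear. induction k as [|k IH]. simpl. lia.
      replace (2 * S k + 1)%nat with (S (S (2 * k + 1))) by lia. rewrite dfact_SS. lia. }
    rewrite !S_INR, !plus_INR, !mult_INR. simpl pow. simpl (INR 2). simpl (INR 1).
    field. repeat split; try exact H1; try (pose proof (pos_INR k); lra).
    apply pow_nonzero. lra.
Qed.

Lemma Sq_bound m : Rabs (Sq m) <= 1.
Proof.
  induction m as [|m IH].
  - rewrite Sq_0, Rabs_R1. lra.
  - rewrite Sq_rec, Rabs_mult.
    assert (Hk := pos_INR m). rewrite S_INR.
    assert (Rabs ((1 - 2 * INR m) / (2 * (INR m + 1))) <= 1).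
    { unfold Rdiv. rewrite Rabs_mult, Rabs_inv, (Rabs_pos_eq (2 * _)) by lra.
      apply (Rmult_le_reg_r (2 * (INR m + 1))). lra.
      rewrite Rmult_assoc, Rinv_l by lra. 
      rewrite Rmult_1_r, Rmult_1_l. apply Rabs_le. lra. }
    pose proof (Rabs_pos (Sq m)). pose proof (Rabs_pos ((1 - 2 * INR m) / (2 * (INR m + 1)))).
    nra.
Qed.

Lemma PSeries_lin (a b : nat -> R) (al be y : R) :
  ex_pseries a y -> ex_pseries b y ->
  PSeries (fun k => al * a k + be * b k) y = al * PSeries a y + be * PSeries b y.
Proof.
  intros Ha Hb. apply is_pseries_unique. apply is_pseries_R.
  apply PSeries_correct in Ha. apply PSeries_correct in Hb.
  apply is_pseries_R in Ha. apply is_pseries_R in Hb.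
  apply (is_series_scal_l al) in Ha. apply (is_series_scal_l be) in Hb.
  generalize (is_series_plus _ _ _ _ Ha Hb). apply is_series_ext.
  intro n. change (al * (a n * y ^ n) + be * (b n * y ^ n) = (al * a n + be * b n) * y ^ n). ring.
Qed.

Lemma ex_pseries_lin (a b : nat -> R) (al be y : R) :
  ex_pseries a y -> ex_pseries b y ->
  ex_pseries (fun k => al * a k + be * b k) y.
Proof.
  intros Ha Hb. apply ex_pseries_R. exists (al * PSeries a y + be * PSeries b y).
  apply PSeries_correct in Ha. apply PSeries_correct in Hb.
  apply is_pseries_R in Ha. apply is_pseries_R in Hb.
  apply (is_series_scal_l al) in Ha. apply (is_series_scal_l be) in Hb.
  generalize (is_series_plus _ _ _ _ Ha Hb). apply is_series_ext.
  intro n. change (al * (a n * y ^ n) + be * (b n * y ^ n) = (al * a n + be * b n) * y ^ n). ring.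
Qed.

Lemma Sq_rad y : Rabs y < 1 -> Rbar_lt (Rabs y) (CV_radius Sq).
Proof.
  intro Hy.
  assert (Hle : Rbar_le 1 (CV_radius Sq)).
  { destruct (CV_radius_bounded Sq) as [Hub _]. apply Hub. exists 1. intro n.
    rewrite pow1, Rmult_1_r. apply Sq_bound. }
  destruct (CV_radius Sq) as [r| |]; simpl in *; try lra; auto.
Qed.

Lemma incr_derive a k : PS_incr_1 (PS_derive a) k = INR k * a k.
Proof. destruct k as [|k]. simpl. change (zero : R) with 0. ring. reflexivity. Qed.

Lemma Sq_ode y : Rabs y < 1 ->
  2 * (1 + y) * PSeries (PS_derive Sq) y = PSeries Sq y.
Proof.
  intro Hy.
  assert (H1 : ex_pseries (PS_derive Sq) y) by (apply ex_pseries_derive, Sq_rad, Hy).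
  assert (H2 : ex_pseries (PS_incr_1 (PS_derive Sq)) y) by (apply ex_pseries_incr_1, H1).
  transitivity (2 * PSeries (PS_derive Sq) y + 2 * PSeries (PS_incr_1 (PS_derive Sq)) y).
  { rewrite PSeries_incr_1. ring. }
  rewrite <- PSeries_lin by assumption.
  apply PSeries_ext. intro k. rewrite incr_derive. unfold PS_derive.
  rewrite Sq_rec. rewrite S_INR. field. pose proof (pos_INR k). lra.
Qed.

Lemma Sq_sqrt x : 0 <= x < 1 -> PSeries Sq x = sqrt (1 + x).
Proof.
  intro Hx.
  set (H := fun t => PSeries Sq t / sqrt (1 + t)).
  set (dH := fun t => (PSeries (PS_derive Sq) t * sqrt (1 + t) - PSeries Sq t * / (2 * sqrt (1 + t))) / sqrt (1 + t) ^ 2).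
  assert (Hd : forall c, Rabs (c - 0) <= x -> is_derive H c (dH c)).
  { intros c Hc. rewrite Rminus_0_r in Hc. apply Rabs_le_between in Hc.
    unfold H, dH. apply (is_derive_div (PSeries Sq) (fun t => sqrt (1 + t))).
    - apply is_derive_PSeries. apply Sq_rad. apply Rabs_lt_between. lra.
    - auto_derive. lra. field. apply Rgt_not_eq, sqrt_lt_R0. lra.
    - apply Rgt_not_eq, sqrt_lt_R0. lra. }
  destruct (MVT_cor4 H dH 0 x Hd x) as [c [Hc1 Hc2]].
  { rewrite Rminus_0_r, Rabs_pos_eq; lra. }
  assert (HdH : dH c = 0).
  { rewrite Rminus_0_r, Rminus_0_r, (Rabs_pos_eq x) in Hc2 by lra.
    assert (Hc : Rabs c < 1) by lra. apply Rabs_lt_between in Hc.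
    unfold dH. rewrite <- (Sq_ode c) by (apply Rabs_lt_between; lra).
    assert (Hs : 0 < sqrt (1 + c)) by (apply sqrt_lt_R0; lra).
    assert (Hs2 : sqrt (1 + c) * sqrt (1 + c) = 1 + c) by (apply sqrt_sqrt; lra).
    field_simplify; try lra. replace (sqrt (1 + c) ^ 2) with (1 + c) by (simpl; lra). unfold Rdiv. ring. }
  rewrite HdH, Rmult_0_l in Hc1.
  unfold H in Hc1. rewrite PSeries_0, Sq_0, Rplus_0_r, sqrt_1 in Hc1.
  assert (Hs : 0 < sqrt (1 + x)) by (apply sqrt_lt_R0; lra).
  apply (Rmult_eq_reg_r (/ sqrt (1 + x))). 2: apply Rgt_not_eq, Rinv_0_lt_compat, Hs.
  rewrite Rinv_r by lra. unfold Rdiv in Hc1. lra.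
Qed.

Definition F (x : R) := sqrt x / asinh (sqrt x).

Lemma F_ode x : 0 < x -> exists d, is_derive F x d /\ F x ^ 2 = sqrt (1 + x) * (F x - 2 * x * d).
Proof.
  intro Hx. unfold F, asinh.
  assert (Hs : 0 < sqrt x) by (apply sqrt_lt_R0; lra).
  assert (Hs2 : sqrt x ^ 2 = x) by (apply pow2_sqrt; lra).
  assert (Hq : 1 < sqrt (x + 1)).
  { rewrite <- sqrt_1 at 1. apply sqrt_lt_1; lra. }
  assert (HA : 0 < ln (sqrt x + sqrt (x + 1))).
  { rewrite <- ln_1. apply ln_increasing; lra. }
  assert (Hs3 : sqrt x * (sqrt x * 1) = x) by (rewrite Rmult_1_r; apply sqrt_sqrt; lra).
  assert (Hs3' : sqrt x * sqrt x = x) by (apply sqrt_sqrt; lra).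
  eexists. split.
  - auto_derive.
    + rewrite Hs3. repeat split; lra.
    + reflexivity.
  - rewrite Hs3, Hs2. rewrite (Rplus_comm 1 x).
    set (q := sqrt (x + 1)) in *. set (A := ln (sqrt x + q)) in *.
    set (s := sqrt x) in *. rewrite <- Hs3' at 1.
    field. repeat split; lra.
Qed.

Theorem theorem2 (C2 : nat -> R)
  (HC : exists r : R, 0 < r /\
        forall t : R, 0 < Rabs t < r ->
          is_series (fun k => C2 k * t ^ (2 * k)%nat / INR (fact (2 * k)%nat)) (t / asinh t))
  (n : nat) :
  conv2 C2 n =
  INR (fact (2 * n)%nat) *
  sum_f_R0 (fun l =>
     (-1) ^ (n - l)%nat * odd_dfact ((Z.of_nat (2 * n) - Z.of_nat (2 * l) - 3)%Z) * (2 * INR l - 1)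
     / (2 ^ (n - l)%nat * INR (fact (n - l)%nat) * INR (fact (2 * l)%nat)) * C2 l) n.
Proof.
  destruct HC as [r [Hr HC]].
  set (c := fun k => C2 k / INR (fact (2 * k))).
  set (rho := Rmin (r * r) 1).
  assert (Hrho : 0 < rho /\ rho <= r * r /\ rho <= 1).
  { unfold rho. split. apply Rmin_glb_lt; nra. split. apply Rmin_l. apply Rmin_r. }
  assert (Hser : forall x, 0 < x < rho -> is_pseries c x (F x)).
  { intros x Hx. apply is_pseries_R.
    assert (Hs : 0 < sqrt x) by (apply sqrt_lt_R0; lra).
    assert (Hs2 : sqrt x ^ 2 = x) by (apply pow2_sqrt; lra).
    assert (Ht : 0 < Rabs (sqrt x) < r).
    { rewrite Rabs_pos_eq by lra. split. lra.
      rewrite <- (sqrt_square r) by lra. apply sqrt_lt_1; nra. }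
    generalize (HC _ Ht). apply is_series_ext. intro k.
    unfold c. change (C2 k * sqrt x ^ (2 * k) / INR (fact (2 * k)) = C2 k / INR (fact (2 * k)) * x ^ k).
    rewrite pow_mult, Hs2. field. apply INR_fact_neq_0. }
  assert (Hexc : forall x, 0 < x < rho -> ex_pseries c x).
  { intros x Hx. exists (F x). apply Hser, Hx. }
  assert (Hradc := L_rad c rho Hexc).
  assert (HFeq : forall x, 0 < x < rho -> F x = PSeries c x).
  { intros x Hx. symmetry. apply is_pseries_unique, Hser, Hx. }
  assert (Hder : forall x, 0 < x < rho -> is_derive F x (PSeries (PS_derive c) x)).
  { intros x Hx. apply (is_derive_ext_loc (PSeries c)).
    - assert (He : 0 < Rmin x (rho - x)) by (apply Rmin_glb_lt; lra).
      exists (mkposreal _ He). intros y Hy.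
      unfold ball in Hy; simpl in Hy; unfold AbsRing_ball, abs, minus, plus, opp in Hy; simpl in Hy.
      pose proof (Rmin_l x (rho - x)). pose proof (Rmin_r x (rho - x)).
      apply Rabs_lt_between in Hy.
      symmetry. apply HFeq. lra.
    - apply is_derive_PSeries. apply Hradc. lra. }
  assert (Hkey : forall x, 0 < x < rho ->
    F x ^ 2 = sqrt (1 + x) * (F x - 2 * x * PSeries (PS_derive c) x)).
  { intros x Hx. destruct (F_ode x) as [d [Hd Hd2]]. lra.
    rewrite <- (is_derive_unique _ _ _ (Hder x Hx)).
    rewrite (is_derive_unique _ _ _ Hd). exact Hd2. }
  set (v := fun k => (1 - 2 * INR k) * c k).
  assert (Hv : forall x, 0 < x < rho ->
     ex_pseries v x /\ PSeries v x = PSeries c x - 2 * x * PSeries (PS_derive c) x).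
  { intros x Hx.
    assert (H1 : ex_pseries (PS_incr_1 (PS_derive c)) x).
    { apply ex_pseries_incr_1, ex_pseries_derive, Hradc. lra. }
    assert (Hext : forall k, 1 * c k + (-2) * PS_incr_1 (PS_derive c) k = v k).
    { intro k. rewrite incr_derive. unfold v. ring. }
    split.
    - apply (ex_pseries_ext _ _ _ Hext). apply ex_pseries_lin. apply Hexc, Hx. exact H1.
    - rewrite <- (PSeries_ext _ _ _ Hext). rewrite PSeries_lin. rewrite PSeries_incr_1. ring.
      apply Hexc, Hx. exact H1. }
  assert (Hradv := L_rad v rho (fun x Hx => proj1 (Hv x Hx))).
  assert (HSrad : forall x, 0 <= x < rho -> Rbar_lt (Rabs x) (CV_radius Sq)).
  { intros x Hx. apply Sq_rad. rewrite Rabs_pos_eq; lra. }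
  assert (Heq := uniq rho (PS_mult c c) (PS_mult v Sq) (proj1 Hrho)).
  assert (Hn : PS_mult c c n = PS_mult v Sq n).
  { apply Heq.
    - intros x Hx. apply ex_pseries_mult; apply Hradc; lra.
    - intros x Hx. apply ex_pseries_mult. apply Hradv; lra. apply HSrad; lra.
    - intros x Hx. rewrite PSeries_mult by (apply Hradc; lra).
      rewrite PSeries_mult by (try apply Hradv; try apply HSrad; lra).
      rewrite Sq_sqrt by lra. rewrite (proj2 (Hv x Hx)).
      rewrite <- HFeq by exact Hx. rewrite (Rmult_comm _ (sqrt (1 + x))), <- Hkey by exact Hx. ring. }
  unfold PS_mult in Hn.
  unfold conv2.
  transitivity (INR (fact (2 * n)) * sum_f_R0 (fun k => c k * c (n - k)%nat) n).
  { rewrite scal_sum. apply sum_eq. intros i Hi. unfold c.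
    field. split; apply INR_fact_neq_0. }
  rewrite Hn, !scal_sum. apply sum_eq. intros l Hl.
  unfold v, c, Sq.
  replace (Z.of_nat (2 * n) - Z.of_nat (2 * l) - 3)%Z with (2 * Z.of_nat (n - l) - 3)%Z by lia.
  field. repeat split; try apply INR_fact_neq_0. apply pow_nonzero. lra.
Qed.
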